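(* For all $0\le p\le t\le 1$, $\pi(p,t)=\sup\{\mathbf P(S_\gamma\ge t)\mid \gamma \text{ a finite stake sequence}\}$.
   Context: Let $\beta_1,\beta_2,\ldots$ be independent Bernoulli random variables with success probability $p$. A stake sequence is a sequence $\gamma=(c_1,c_2,\ldots)$ of non-negative reals with $c_1\ge c_2\ge\cdots$ and $\sum_i c_i=1$; it is finite if $c_i=0$ for all but finitely many $i$. Write $S_\gamma=\sum_i c_i\beta_i$. For $0\le p\le t\le 1$ define $\pi(p,t)=\sup\{\mathbf P(S_\gamma\ge t)\mid \gamma \text{ a stake sequence}\}$. *)

(* Defs.v *)
From HB Require Import structures.
From mathcomp Require Import all_boot all_order all_algebra.
From mathcomp Require Import all_classical all_reals.
From mathcomp Require Import ereal topology normedtype sequences measure lebesgue_measure probability.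
Set Implicit Arguments. Unset Strict Implicit. Unset Printing Implicit Defensive.
Import Order.TTheory GRing.Theory Num.Theory.
Local Open Scope classical_set_scope.
Local Open Scope ring_scope.

Section Defs.
Context {d : measure_display} {T : measurableType d} {R : realType}.

Definition mutually_independent (P : probability T R) (beta : nat -> T -> R) :=
  forall (s : seq nat) (B : nat -> set R),
    uniq s -> (forall i, measurable (B i)) ->
    P (\bigcap_(i in [set i | i \in s]) (beta i @^-1` B i)) =
    \big[*%E/1%E]_(i <- s) P (beta i @^-1` B i).

Definition iid_bernoulli (P : probability T R) (p : R) (beta : nat -> T -> R) :=
  [/\ (forall i, measurable_fun setT (beta i)),
      (forall i x, beta i x = 0 \/ beta i x = 1),
      (forall i, P (beta i @^-1` [set 1]) = p%:E) &
      mutually_independent P beta].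

Definition stake_seq (c : nat -> R) :=
  [/\ (forall i, 0 <= c i),
      (forall i, c i.+1 <= c i) &
      (\sum_(i <oo) (c i)%:E = 1)%E].

Definition finite_stake_seq (c : nat -> R) :=
  stake_seq c /\ exists N, forall i, (N <= i)%N -> c i = 0.

Definition S_gamma (c : nat -> R) (beta : nat -> T -> R) (x : T) : \bar R :=
  (\sum_(i <oo) (c i * beta i x)%:E)%E.

Definition prob_ge (P : probability T R) (beta : nat -> T -> R) (c : nat -> R) (t : R) : \bar R :=
  P [set x | (t%:E <= S_gamma c beta x)%E].

(* pi(p,t) = sup over stake sequences (p is encoded in beta). *)
Definition pi_sup (P : probability T R) (beta : nat -> T -> R) (t : R) : \bar R :=
  ereal_sup [set prob_ge P beta c t | c in stake_seq].

Definition pi_fin_sup (P : probability T R) (beta : nat -> T -> R) (t : R) : \bar R :=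
  ereal_sup [set prob_ge P beta c t | c in finite_stake_seq].

End Defs.

(* Main.v *)
Require Import Defs.
From HB Require Import structures.
From mathcomp Require Import all_boot all_order all_algebra.
From mathcomp Require Import all_classical all_reals.
From mathcomp Require Import ereal topology normedtype sequences measure lebesgue_measure probability.
From mathcomp Require Import measurable_realfun lebesgue_integral.
From mathcomp Require Import ring lra zify.
Import Order.TTheory GRing.Theory Num.Theory.
Local Open Scope ring_scope.

Set Implicit Arguments. Unset Strict Implicit. Unset Printing Implicit Defensive.
Local Open Scope classical_set_scope.
Local Open Scope ring_scope.

Section CombS.
Variable (R : realFieldType) (p : R).

Fixpoint Ex (n : nat) (F : seq bool -> R) : R :=
  match n with
  | 0 => F [::]
  | n.+1 => p * Ex n (fun s => F (true :: s)) + (1 - p) * Ex n (fun s => F (false :: s))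
  end.

Lemma Ex_ext n F G : (forall s, size s = n -> F s = G s) -> Ex n F = Ex n G.
Proof.
elim: n F G => [|n IH] F G /= h; first exact: h.
by congr (_ * _ + _ * _); apply: IH => s hs; apply: h => /=; rewrite hs.
Qed.

Lemma Ex_lin n a b F G : Ex n (fun s => a * F s + b * G s) = a * Ex n F + b * Ex n G.
Proof.
elim: n F G => [|n IH] F G //=.
rewrite (IH (fun s => F (true :: s))) (IH (fun s => F (false :: s))); ring.
Qed.

Lemma Ex_cst n a : Ex n (fun _ => a) = a.
Proof. elim: n a => [|n IH] a //=; rewrite !IH; ring. Qed.

Lemma Ex_le n F G : 0 <= p -> p <= 1 ->
  (forall s, size s = n -> F s <= G s) -> Ex n F <= Ex n G.
Proof.
move=> p0 p1; elim: n F G => [|n IH] F G h /=; first exact: h.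
apply: lerD; apply: ler_wpM2l; try lra; apply: IH => s hs; apply: h => /=; rewrite hs //.
Qed.

Lemma Ex_app j n F : Ex (j + n) F = Ex j (fun sg => Ex n (fun s => F (sg ++ s))).
Proof.
elim: j F => [|j IH] F //=.
by rewrite (IH (fun s => F (true :: s))) (IH (fun s => F (false :: s))).
Qed.

Lemma Ex_sum n m (F : 'I_m -> seq bool -> R) :
  Ex n (fun s => \sum_(i < m) F i s) = \sum_(i < m) Ex n (F i).
Proof.
elim: m F => [|m IH] F.
  by rewrite big_ord0 (Ex_ext (G := fun _ => 0)) ?Ex_cst // => s _; rewrite big_ord0.
rewrite big_ord_recr /= -IH.
have := Ex_lin n 1 1 (fun s => \sum_(i < m) F (widen_ord (leqnSn m) i) s) (F ord_max).
rewrite !mul1r => <-.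
by apply: Ex_ext => s _; rewrite big_ord_recr /= !mul1r.
Qed.

Variable q : R.
Hypotheses (q0 : 0 <= q) (qp : q <= p) (qp' : q <= 1 - p).

Let p0 : 0 <= p. Proof. exact: le_trans q0 qp. Qed.
Let p1 : p <= 1. Proof. by rewrite -subr_ge0; exact: le_trans q0 qp'. Qed.

Lemma Ex_ge0 n H : (forall s, size s = n -> 0 <= H s) -> 0 <= Ex n H.
Proof. by move=> h; rewrite -(Ex_cst n 0); apply: Ex_le. Qed.

Lemma Ex_pt0 j H : (forall s, size s = j -> 0 <= H s) ->
  q ^+ j * H (nseq j false) <= Ex j H.
Proof.
elim: j H => [|j IH] H h /=; first by rewrite expr0 mul1r.
have h1 : 0 <= Ex j (fun s => H (true :: s)).
  by apply: Ex_ge0 => s hs; apply: h => /=; rewrite hs.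
have h2 := IH (fun s => H (false :: s)) (fun s hs => h (false :: s) (ltac:(by rewrite /= hs))).
have h3 : 0 <= H (false :: nseq j false) by apply: h; rewrite /= size_nseq.
have h4 : 0 <= q ^+ j by apply: exprn_ge0.
rewrite exprS -mulrA.
have : q * (q ^+ j * H (false :: nseq j false)) <= (1 - p) * Ex j (fun s => H (false :: s)).
  apply: ler_pM => //; first by apply: mulr_ge0.
have := mulr_ge0 p0 h1.
lra.
Qed.

Definition chain j i := nseq i true ++ nseq (j - i) false.

Lemma Ex_chain j H : (forall s, size s = j -> 0 <= H s) ->
  q ^+ j * \sum_(i < j.+1) H (chain j i) <= Ex j H.
Proof.
elim: j H => [|j IH] H h /=.
  by rewrite expr0 mul1r big_ord_recl big_ord0 addr0.
have h1 := IH (fun s => H (true :: s)) (fun s hs => h (true :: s) (ltac:(by rewrite /= hs))).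
have h2 := @Ex_pt0 j (fun s => H (false :: s)) (fun s hs => h (false :: s) (ltac:(by rewrite /= hs))).
rewrite big_ord_recl /=.
have -> : \sum_(i < j.+1) H (chain j.+1 (bump 0 i)) = \sum_(i < j.+1) H (true :: chain j i).
  by apply: eq_bigr => i _; rewrite /chain /bump /= add1n subSS.
have -> : chain j.+1 0 = false :: nseq j false by rewrite /chain subn0.
set A := \sum_(i < j.+1) _ in h1 *.
have hA : 0 <= A by apply: sumr_ge0 => i _; apply: h; rewrite /= /chain size_cat !size_nseq subnKC // -ltnS.
have h3 : 0 <= H (false :: nseq j false) by apply: h; rewrite /= size_nseq.
have h4 : 0 <= q ^+ j by apply: exprn_ge0.
rewrite exprS -mulrA mulrDr.
have e1 : q * (q ^+ j * H (false :: nseq j false)) <= (1 - p) * Ex j (fun s => H (false :: s)).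
  by apply: ler_pM => //; apply: mulr_ge0.
have e2 : q * (q ^+ j * A) <= p * Ex j (fun s => H (true :: s)).
  by apply: ler_pM => //; apply: mulr_ge0.
lra.
Qed.

End CombS.

Definition kanti k (A : seq bool -> bool) := forall s s',
  (forall i, nth false s i ==> nth false s' i) -> A s -> A s' ->
  forall i, (i < k)%N -> nth false s i = nth false s' i.

Lemma kanti_app j k A sg : size sg = j -> kanti (j + k) A -> kanti k (fun s => A (sg ++ s)).
Proof.
move=> hs hA s s' hle As As' i ik.
have e : forall u, nth false (sg ++ u) (j + i) = nth false u i.
  by move=> u; rewrite nth_cat hs ltnNge leq_addr /= addKn.
have := hA (sg ++ s) (sg ++ s') _ As As' (j + i).
rewrite !e; apply => //; last by rewrite ltn_add2l.
move=> x; rewrite !nth_cat; case: ifP => _ //; exact: implybb.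
Qed.

Lemma kanti_le k k' A : (k <= k')%N -> kanti k' A -> kanti k A.
Proof. move=> kk hA s s' hle As As' i ik; apply: hA => //; exact: leq_trans ik kk. Qed.

Lemma nth_chain j i x : (i <= j)%N -> nth false (chain j i) x = (x < i)%N.
Proof.
move=> ij; rewrite /chain nth_cat size_nseq; case: ltnP => h; first by rewrite nth_nseq h.
by rewrite nth_nseq; case: ifP.
Qed.

Lemma size_chain j i : (i <= j)%N -> size (chain j i) = j.
Proof. by move=> ij; rewrite /chain size_cat !size_nseq subnKC. Qed.

Lemma nth_chain_cat j i s x : (i <= j)%N ->
  nth false (chain j i ++ s) x = if (x < j)%N then (x < i)%N else nth false s (x - j).
Proof. by move=> ij; rewrite nth_cat size_chain //; case: ifP => // _; rewrite nth_chain. Qed.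

Lemma chain_disj j k A s i l : kanti (j + k) A -> (i < l)%N -> (l <= j)%N ->
  A (chain j i ++ s) -> A (chain j l ++ s) -> False.
Proof.
move=> hA il lj h1 h2.
have ij : (i <= j)%N by apply: leq_trans (ltnW il) lj.
have ij' : (i < j)%N by apply: leq_trans il lj.
have hle : forall x, nth false (chain j i ++ s) x ==> nth false (chain j l ++ s) x.
  move=> x; rewrite !nth_chain_cat //; case: ifP => _; last exact: implybb.
  apply/implyP => xi; exact: ltn_trans xi il.
have := hA _ _ hle h1 h2 i (leq_trans ij' (leq_addr k j)).
by rewrite !nth_chain_cat // ij' ltnn il.
Qed.

Section Iter.
Variable (R : realType) (p q : R).
Hypotheses (q0 : 0 <= q) (qp : q <= p) (qp' : q <= 1 - p).
Let p0 : 0 <= p. Proof. exact: le_trans q0 qp. Qed.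
Let p1 : p <= 1. Proof. by rewrite -subr_ge0; exact: le_trans q0 qp'. Qed.

Lemma sum_chain_le1 j k A s : kanti (j + k) A ->
  \sum_(i < j.+1) ((A (chain j i ++ s))%:R : R) <= 1.
Proof.
move=> hA.
case: (pickP (fun i : 'I_j.+1 => A (chain j i ++ s))) => [i0 Hi0 | none].
  rewrite (bigD1 i0) //= big1 ?Hi0 ?addr0 // => i ne.
  case Ai: (A _) => //; exfalso.
  have hi := ltn_ord i; have hi0 := ltn_ord i0.
  case: (ltngtP i i0) => c.
  - exact: (chain_disj hA c _ Ai Hi0).
  - exact: (chain_disj hA c _ Hi0 Ai).
  - by move: ne; rewrite -(inj_eq val_inj) /= c eqxx.
by rewrite big1 // => i _; rewrite none.
Qed.

Lemma step k j M : (forall n A, (k <= n)%N -> kanti k A -> Ex p n (fun s => (A s)%:R) <= M) ->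
  forall n A, (j + k <= n)%N -> kanti (j + k) A ->
  Ex p n (fun s => (A s)%:R) <= M - q ^+ j * ((j.+1)%:R * M - 1).
Proof.
move=> hM n A hn hA.
have -> : n = (j + (n - j))%N by lia.
rewrite Ex_app.
set G := fun sg => Ex p (n - j) (fun s => (A (sg ++ s))%:R).
have hG : forall sg, size sg = j -> G sg <= M.
  move=> sg hs; apply: hM; first lia.
  exact: kanti_app hs hA.
have hsum : \sum_(i < j.+1) G (chain j i) <= 1.
  rewrite /G -Ex_sum -[X in _ <= X](Ex_cst p (n - j) 1); apply: Ex_le => // s _.
  exact: sum_chain_le1 hA.
have hc := @Ex_chain R p q q0 qp qp' j (fun sg => M - G sg).
have hc' : q ^+ j * \sum_(i < j.+1) (M - G (chain j i)) <= M - Ex p j G.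
  have <- : Ex p j (fun sg => 1 * M + (-1) * G sg) = M - Ex p j G.
    by rewrite Ex_lin Ex_cst; ring.
  rewrite (@Ex_ext R p j _ (fun sg => M - G sg)); last by move=> s _; ring.
  by apply: hc => s hs; rewrite subr_ge0; apply: hG.
rewrite sumrB sumr_const card_ord in hc'.
have hX : 0 <= q ^+ j by apply: exprn_ge0.
have : q ^+ j * (\sum_(i < j.+1) G (chain j i)) <= q ^+ j * 1 by apply: ler_wpM2l.
rewrite -mulr_natl in hc'.
set S := \sum_(i < j.+1) _ in hc' *.
move: hc'; rewrite mulrBr => hc'.
rewrite mulrBr; lra.
Qed.


Lemma Ex_ind_le1 n (A : seq bool -> bool) : Ex p n (fun s => ((A s)%:R : R)) <= 1.
Proof.
rewrite -[X in _ <= X](Ex_cst p n 1); apply: Ex_le => // s _ /=.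
by case: (A s); rewrite ?lexx ?ler01.
Qed.

Lemma iter_bound j : 0 < q -> forall m n A, (m * j <= n)%N -> kanti (m * j) A ->
  Ex p n (fun s => (A s)%:R) <= Num.max (2 / (j.+1)%:R) ((1 - q ^+ j / 2) ^+ m).
Proof.
move=> qpos; elim=> [|m IH] n A hn hA.
  by rewrite expr0 le_max Ex_ind_le1 orbT.
rewrite mulSn in hn hA.
set a := 2 / (j.+1)%:R; set rho := 1 - q ^+ j / 2; set M := Num.max a (rho ^+ m).
apply: le_trans (step (k := (m * j)%N) (j := j) (M := M) IH hn hA) _.
have hX0 : 0 <= q ^+ j by apply: exprn_ge0.
have hX1 : q ^+ j <= 1 by apply: exprn_ile1 => //; apply: le_trans qp p1.
have hj : 0 < (j.+1)%:R :> R by rewrite ltr0n.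
have ha : (j.+1)%:R * a = 2 by rewrite /a mulrC mulfVK // gt_eqF.
have ha0 : 0 <= a by rewrite /a divr_ge0 // ler0n.
have hMa : a <= M by rewrite le_max lexx.
have hMr : rho ^+ m <= M by rewrite le_max lexx orbT.
have hM0 : 0 <= M := le_trans ha0 hMa.
have h1 : 2 <= (j.+1)%:R * M by rewrite -ha ler_wpM2l // ltW.
have hj1 : 1 <= (j.+1)%:R :> R by rewrite ler1n.
have h2 : M <= (j.+1)%:R * M by rewrite -[X in X <= _]mul1r ler_wpM2r.
have h3 : q ^+ j * (M / 2) <= q ^+ j * ((j.+1)%:R * M - 1).
  by apply: ler_wpM2l => //; lra.
have hrho0 : 0 <= rho by rewrite /rho; lra.
have hrho1 : rho <= 1 by rewrite /rho; lra.
have h4 : M - q ^+ j * ((j.+1)%:R * M - 1) <= rho * M by rewrite /rho; lra.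
apply: le_trans h4 _.
rewrite /M; case: (leP a (rho ^+ m)) => hc.
  by rewrite -exprS le_max lexx orbT.
by rewrite le_max; apply/orP; left; rewrite -[X in _ <= X]mul1r ler_wpM2r.
Qed.

Lemma anticonc : 0 < q -> forall e, 0 < e -> exists k, forall n A, (k <= n)%N -> kanti k A ->
  Ex p n (fun s => (A s)%:R) <= e.
Proof.
move=> qpos e e0.
pose j := Num.truncn (2 / e).
have hj : 2 / (j.+1)%:R <= e.
  have := truncnS_gt (2 / e); rewrite -/j => h.
  rewrite ler_pdivrMr ?ltr0n //.
  by rewrite ltr_pdivrMr // in h; rewrite mulrC ltW.
set rho := 1 - q ^+ j / 2.
have hX0 : 0 < q ^+ j by apply: exprn_gt0.
have hX1 : q ^+ j <= 1 by apply: exprn_ile1; [exact: ltW | apply: le_trans qp p1].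
have hr : `|rho| < 1 by rewrite ger0_norm /rho; lra.
have := @cvgr0_norm_lt R R^o _ _ _ (fun n => rho ^+ n) (cvg_expr hr) e e0.
case=> N _ HN.
exists (N * j)%N => n A hn hA.
apply: le_trans (iter_bound qpos hn hA) _.
rewrite ge_max hj /=.
have := HN N (leqnn N); rewrite /= ger0_norm; [exact: ltW|].
apply: exprn_ge0; rewrite /rho; lra.
Qed.

End Iter.

Section Prob.
Context d (T : measurableType d) (R : realType) (P : probability T R) (p : R)
  (beta : nat -> T -> R).
Hypothesis hb : iid_bernoulli P p beta.

Definition bits m n x := map (fun i => beta i x == 1) (iota m n).

Definition Cyl (s : seq nat) (B : nat -> set R) :=
  \bigcap_(i in [set i | i \in s]) (beta i @^-1` B i).

Lemma mbeta i (B : set R) : measurable B -> measurable (beta i @^-1` B).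
Proof.
case: hb => hm _ _ _ mB.
by have := hm i measurableT B mB; rewrite setTI.
Qed.

Lemma Cyl_nil B : Cyl [::] B = setT.
Proof. by apply/seteqP; split => x //= _ i. Qed.

Lemma Cyl_cons i s B : Cyl (i :: s) B = beta i @^-1` B i `&` Cyl s B.
Proof.
apply/seteqP; split => x /=.
  move=> h; split; first by apply: h; rewrite /= inE eqxx.
  by move=> j /= js; apply: h; rewrite /= inE js orbT.
move=> [h1 h2] j /=; rewrite inE => /orP [/eqP -> //|js]; exact: h2.
Qed.

Lemma mCyl s B : (forall i, measurable (B i)) -> measurable (Cyl s B).
Proof.
move=> mB; elim: s => [|i s IH]; first by rewrite Cyl_nil.
by rewrite Cyl_cons; apply: measurableI => //; exact: mbeta.
Qed.

Lemma mbits n : forall m (A : seq bool -> bool), measurable [set x | A (bits m n x)].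
Proof.
elim: n => [|n IH] m A.
  rewrite /bits /=; case: (A [::]).
    by rewrite (_ : [set _ | true] = setT) //; apply/seteqP; split.
  by rewrite (_ : [set _ | false] = set0) //; apply/seteqP; split.
have m1 : measurable (beta m @^-1` [set 1]) by apply: mbeta; exact: measurable_set1.
have -> : [set x | A (bits m n.+1 x)] = (beta m @^-1` [set 1] `&` [set x | A (true :: bits m.+1 n x)]) `|`
   (~` (beta m @^-1` [set 1]) `&` [set x | A (false :: bits m.+1 n x)]).
  apply/seteqP; split => x /=; rewrite /bits /=.
    by case: eqP => h Ax; [left | right].
  by case: eqP => h [] [].
apply: measurableU; apply: measurableI => //.
- exact: (IH m.+1 (fun s => A (true :: s))).
- exact: measurableC.
- exact: (IH m.+1 (fun s => A (false :: s))).
Qed.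


Lemma P_fin (A : set T) : measurable A -> P A = (fine (P A))%:E.
Proof.
move=> mA; rewrite fineK // ge0_fin_numE ?measure_ge0 //.
exact: le_lt_trans (probability_le1 P mA) (ltry _).
Qed.

Definition Bm (B : nat -> set R) m (e : bool) : nat -> set R :=
  fun i => if i == m then (if e then [set 1] else ~` [set 1]) else B i.

Lemma mBm B m e : (forall i, measurable (B i)) -> forall i, measurable (Bm B m e i).
Proof.
move=> mB i; rewrite /Bm; case: eqP => // _; case: e => //.
by apply: measurableC; exact: measurable_set1.
Qed.

Lemma P_Cyl_cons s B m e : uniq s -> (forall i, measurable (B i)) ->
  (forall i, i \in s -> (i < m)%N) ->
  fine (P (Cyl (m :: s) (Bm B m e))) = (if e then p else 1 - p) * fine (P (Cyl s B)).
Proof.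
move=> us mB sm.
case: hb => _ _ hp hind.
have ms : m \notin s by apply/negP => /sm; rewrite ltnn.
have us' : uniq (m :: s) by rewrite /= ms us.
rewrite /Cyl (hind _ _ us' (@mBm B m e mB)) big_cons.
rewrite (_ : \big[*%E/1%E]_(j <- s) P (beta j @^-1` Bm B m e j) = P (Cyl s B)); last first.
  rewrite (hind _ _ us mB); apply: eq_big_seq => i /sm im.
  by rewrite /Bm ifN // neq_ltn im.
rewrite (P_fin (mCyl s mB)) /Bm eqxx.
case: e.
  by rewrite hp -EFinM.
rewrite -preimage_setC probability_setC; last by apply: mbeta; exact: measurable_set1.
by rewrite hp -EFinB -EFinM.
Qed.

Lemma Pcyl n : forall m (A : seq bool -> bool) s B, uniq s -> (forall i, measurable (B i)) ->
  (forall i, i \in s -> (i < m)%N) ->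
  P (Cyl s B `&` [set x | A (bits m n x)]) = (Ex p n (fun u => (A u)%:R) * fine (P (Cyl s B)))%:E.
Proof.
elim: n => [|n IH] m A s B us mB sm.
  rewrite /bits /=; case: (A [::]).
    rewrite (_ : [set _ | true] = setT); last by apply/seteqP; split.
    by rewrite setIT mul1r -P_fin //; exact: mCyl.
  rewrite (_ : [set _ | false] = set0); last by apply/seteqP; split.
  by rewrite setI0 measure0 mul0r.
have ms : m \notin s by apply/negP => /sm; rewrite ltnn.
have us' : uniq (m :: s) by rewrite /= ms us.
have sm' : forall i, i \in m :: s -> (i < m.+1)%N.
  by move=> i; rewrite inE => /orP [/eqP -> //|/sm /ltnW].
have -> : Cyl s B `&` [set x | A (bits m n.+1 x)] =
   (Cyl (m :: s) (Bm B m true) `&` [set x | A (true :: bits m.+1 n x)]) `|`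
   (Cyl (m :: s) (Bm B m false) `&` [set x | A (false :: bits m.+1 n x)]).
  have e : forall b, Cyl s (Bm B m b) = Cyl s B.
    move=> b; apply/seteqP; split => x /= h i /= hi; have := h i hi;
      by rewrite /Bm ifN // neq_ltn sm.
  rewrite !Cyl_cons !e /Bm eqxx.
  apply/seteqP; split => x /=; rewrite /bits /=.
    by case: eqP => h [Cx Ax]; [left | right].
  by case: eqP => h [[[h1 Cx] Ax]|[[h1 Cx] Ax]] //; split.
rewrite measureU.
- have := (IH m.+1 (fun u => A (true :: u)) _ _ us' (@mBm B m true mB) sm').
  have := (IH m.+1 (fun u => A (false :: u)) _ _ us' (@mBm B m false mB) sm').
  rewrite /= => -> ->.
  rewrite !P_Cyl_cons // -EFinD /=; congr (_%:E); ring.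
- apply: measurableI; [exact: mCyl (@mBm B m true mB) | exact: (mbits n m.+1 (fun u => A (true :: u)))].
- apply: measurableI; [exact: mCyl (@mBm B m false mB) | exact: (mbits n m.+1 (fun u => A (false :: u)))].
- rewrite !Cyl_cons /Bm eqxx; apply/seteqP; split => x //=.
  by move=> [[[h1 _] _] [[h2 _] _]]; exact: h2 h1.
Qed.

Lemma Pbits n (A : seq bool -> bool) :
  P [set x | A (bits 0 n x)] = (Ex p n (fun u => (A u)%:R))%:E.
Proof.
have := @Pcyl n 0 A [::] (fun _ => setT) erefl (fun _ => measurableT) (ltac:(by move=> i)).
by rewrite Cyl_nil setTI probability_setT /= mulr1.
Qed.

End Prob.

Section Series.
Context (R : realType).

Lemma stake_ge0 (c : nat -> R) : stake_seq c -> forall i, 0 <= c i.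
Proof. by case. Qed.

Lemma stake_noninc (c : nat -> R) : stake_seq c -> forall i j, (i <= j)%N -> c j <= c i.
Proof.
case=> _ h _ i j ij; elim: j ij => [|j IH]; first by rewrite leqn0 => /eqP ->.
rewrite leq_eqVlt => /orP [/eqP <- //|]; rewrite ltnS => /IH; exact: le_trans (h j).
Qed.

Lemma esum_fin (u : nat -> R) n :
  (\sum_(0 <= i < n) (u i)%:E)%E = (\sum_(i < n) u i)%:E.
Proof. by rewrite sumEFin big_mkord. Qed.

Lemma tail_c (c : nat -> R) n : stake_seq c ->
  (\sum_(n <= i <oo) (c i)%:E)%E = (1 - \sum_(i < n) c i)%:E.
Proof.
move=> hc; have c0 := stake_ge0 hc; case: (hc) => _ _ h1.
have := @nneseries_split R (fun i => (c i)%:E) 0 n (fun k _ => c0 k).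
rewrite h1 add0n esum_fin.
have : (0 <= \sum_(n <= i <oo) (c i)%:E)%E by apply: nneseries_ge0 => i _ _; exact: c0.
case: (\sum_(n <= i <oo) (c i)%:E)%E => [r| |] //= _.
rewrite -EFinD => /(congr1 fine) /= ->; congr (_%:E); ring.
Qed.

Lemma Cn_le1 (c : nat -> R) n : stake_seq c -> \sum_(i < n) c i <= 1.
Proof.
move=> hc; have := tail_c n hc.
have : (0 <= \sum_(n <= i <oo) (c i)%:E)%E by apply: nneseries_ge0 => i _ _; exact: stake_ge0 hc i.
by move=> + h; rewrite h lee_fin subr_ge0.
Qed.

Lemma Cn_mono (c : nat -> R) m n : stake_seq c -> (m <= n)%N ->
  \sum_(i < m) c i <= \sum_(i < n) c i.
Proof.
move=> hc mn; rewrite -!(big_mkord xpredT) (@big_cat_nat _ _ _ m 0 n _ _ (leq0n m) mn) /= lerDl.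
by apply: sumr_ge0 => i _; exact: stake_ge0 hc i.
Qed.

Lemma Cn_close (c : nat -> R) dl : stake_seq c -> 0 < dl -> exists N, 1 - dl < \sum_(i < N) c i.
Proof.
move=> hc dl0; have c0 := stake_ge0 hc; case: (hc) => _ _ h1.
have hs : (\sum_(i <oo) (c i)%:E)%E = ereal_sup (range (fun n => \sum_(0 <= i < n) (c i)%:E))%E.
  by move: (fun n (_ : (0 <= n)%N) (_ : xpredT n) => c0 n : (0 <= (c n)%:E)%E) =>
    /ereal_nondecreasing_series/ereal_nondecreasing_cvgn/cvg_lim => ->.
have : ((1 - dl)%:E < ereal_sup (range (fun n => \sum_(0 <= i < n) (c i)%:E)))%E.
  by rewrite -hs h1 lte_fin; lra.
move=> /ereal_sup_gt [_ [N _ <-]]; rewrite esum_fin lte_fin => h.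
by exists N.
Qed.

End Series.

Lemma series_fin (R : realType) (u : nat -> R) n : (forall i, 0 <= u i) -> (forall i, (n <= i)%N -> u i = 0) ->
  (\sum_(i <oo) (u i)%:E)%E = (\sum_(i < n) u i)%:E.
Proof.
move=> u0 uz.
rewrite (@nneseries_split R (fun i => (u i)%:E) 0 n) ?add0n; last by move=> k _; rewrite lee_fin.
rewrite esum_fin eseries0 ?adde0 // => i hi _; by rewrite uz.
Qed.

Section SB.
Context d (T : measurableType d) (R : realType) (P : probability T R) (p : R)
  (beta : nat -> T -> R).
Hypothesis hb : iid_bernoulli P p beta.

Lemma beta01 i x : beta i x = (beta i x == 1)%:R.
Proof.
case: hb => _ h _ _; case: (h i x) => ->; rewrite ?eqxx //.
by rewrite eq_sym oner_eq0.
Qed.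

Lemma beta_ge0 i x : 0 <= beta i x.
Proof. by rewrite beta01; case: (_ == _). Qed.

Lemma S_le c x n : stake_seq c ->
  (S_gamma c beta x <= (\sum_(i < n) c i * (beta i x == 1)%:R + (1 - \sum_(i < n) c i))%:E)%E.
Proof.
move=> hc; have c0 := stake_ge0 hc.
rewrite /S_gamma (@nneseries_split R (fun i => (c i * beta i x)%:E) 0 n) ?add0n; last first.
  by move=> k _; rewrite lee_fin mulr_ge0 // beta_ge0.
rewrite esum_fin EFinD; apply: leeD.
  by rewrite lee_fin le_eqVlt; apply/orP; left; apply/eqP; apply: eq_bigr => i _; rewrite -beta01.
rewrite -tail_c //; apply: lee_nneseries.
  by move=> i _ _; rewrite lee_fin mulr_ge0 // beta_ge0.
by move=> i _; rewrite lee_fin beta01; case: (_ == _); rewrite ?mulr1 ?mulr0.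
Qed.

Lemma S_fin c n x : (forall i, 0 <= c i) -> (forall i, (n <= i)%N -> c i = 0) ->
  S_gamma c beta x = (\sum_(i < n) c i * (beta i x == 1)%:R)%:E.
Proof.
move=> c0 cz; rewrite /S_gamma (@series_fin R (fun i => c i * beta i x) n).
- by congr (_%:E); apply: eq_bigr => i _; rewrite -beta01.
- by move=> i; rewrite mulr_ge0 // beta_ge0.
- by move=> i hi; rewrite cz // mul0r.
Qed.

Lemma nth_bits n x i : (i < n)%N -> nth false (bits beta 0 n x) i = (beta i x == 1).
Proof.
move=> hi; rewrite /bits (nth_map 0) ?size_iota // nth_iota //.
Qed.

End SB.

Section Bound.
Context (R : realType) (p t : R) (c : nat -> R).
Hypotheses (hc : stake_seq c) (cpos : forall i, 0 < c i) (p0 : 0 <= p) (pt : p <= t) (t1 : t <= 1).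

Definition vn n (s : seq bool) := \sum_(i < n) c i * (nth false s i)%:R.
Definition An n (s : seq bool) :=
  (t - (1 - \sum_(i < n) c i) <= vn n s) && (vn n s < t * \sum_(i < n) c i).

Lemma Ex_p0 n (F : seq bool -> R) : Ex 0 n F = F (nseq n false).
Proof.
elim: n F => [|n IH] F //=; rewrite !IH mul0r add0r subr0 mul1r //.
Qed.

Lemma Ex_p1 n (F : seq bool -> R) : Ex 1 n F = F (nseq n true).
Proof.
elim: n F => [|n IH] F //=; rewrite !IH mul1r subrr mul0r addr0 //.
Qed.

Lemma vn_nseq n b : vn n (nseq n b) = if b then \sum_(i < n) c i else 0.
Proof.
rewrite /vn; case: b.
  by apply: eq_bigr => i _; rewrite nth_nseq ltn_ord mulr1.
by rewrite big1 // => i _; rewrite nth_nseq ltn_ord mulr0.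
Qed.

Lemma main_bound e : 0 < e -> exists n, (1 <= n)%N /\ Ex p n (fun s => (An n s)%:R) <= e.
Proof.
move=> e0.
have c0 := stake_ge0 hc.
have [hp|hp] := eqVneq p 0.
  rewrite hp.
  have [ht|ht] := eqVneq t 0.
    exists 1%N; split => //; rewrite Ex_p0 /An vn_nseq ht mul0r ltxx andbF; exact: ltW.
  have tpos : 0 < t by rewrite lt_def ht; exact: le_trans p0 pt.
  have [N hN] := Cn_close hc tpos.
  exists (maxn N 1); split; first by rewrite leq_maxr.
  rewrite Ex_p0 /An vn_nseq.
  have := Cn_mono hc (leq_maxl N 1) => hm.
  have -> : (t - (1 - \sum_(i < maxn N 1) c i) <= 0) = false.
    by apply/negbTE; rewrite -ltNge; lra.
  exact: ltW.
have [hp1|hp1] := eqVneq p 1.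
  have ht : t = 1 by apply/eqP; rewrite eq_le t1 -hp1 pt.
  exists 1%N; split => //; rewrite hp1 Ex_p1 /An vn_nseq ht mul1r ltxx andbF; exact: ltW.
have pp : 0 < p by rewrite lt_def hp.
have pp1 : p < 1 by rewrite lt_def eq_sym hp1 (le_trans pt t1).
set q := Num.min p (1 - p).
have q0 : 0 < q by rewrite lt_min pp subr_gt0.
have qp : q <= p by rewrite ge_min lexx.
have qp' : q <= 1 - p by rewrite ge_min lexx orbT.
have [k hk] := anticonc (ltW q0) qp qp' q0 e0.
have [N hN] := Cn_close hc (cpos k).
set n := maxn N (maxn k 1).
have Nn : (N <= n)%N by rewrite leq_maxl.
have kn : (k <= n)%N by rewrite /n leq_max leq_maxl orbT.
have n1 : (1 <= n)%N by rewrite /n leq_max leq_max leqnn !orbT.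
exists n; split => //; apply: hk => //.
move=> s s' hle As As' i ik.
have hm := Cn_mono hc Nn.
have hC1 := Cn_le1 n hc.
have t0 : 0 <= t by exact: le_trans p0 pt.
case: (boolP (nth false s i)) => si.
  by move: (hle i); rewrite si /= => ->.
case: (boolP (nth false s' i)) => si' //; exfalso.
have iln : (i < n)%N by exact: leq_trans ik kn.
have hdiff : c i <= vn n s' - vn n s.
  rewrite /vn -sumrB (bigD1 (Ordinal iln)) //= (negbTE si) si' mulr0 mulr1 subr0 lerDl.
  apply: sumr_ge0 => j _; rewrite -mulrBr mulr_ge0 //.
  by move: (hle j); case: (nth false s j); case: (nth false s' j); rewrite //= ?subrr ?subr0.
have cki : c k <= c i by apply: stake_noninc hc _ _ (ltnW ik).
move: As As'; rewrite /An => /andP [h1 _] /andP [_ h2].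
set C := \sum_(i < n) c i in hm hC1 h1 h2.
have : t * (1 - C) >= 0 by apply: mulr_ge0 => //; lra.
lra.
Qed.

End Bound.

Unset Implicit Arguments.

Theorem proposition6 (d : measure_display) (T : measurableType d) (R : realType)
  (P : probability T R) (p t : R) (beta : nat -> T -> R) :
  iid_bernoulli P p beta ->
  0 <= p -> p <= t -> t <= 1 ->
  pi_sup P beta t = pi_fin_sup P beta t.
Proof.
move=> hb p0 pt t1.
apply/eqP; rewrite eq_le; apply/andP; split; last first.
  by apply: ereal_sup_le => _ [c [hc _] <-]; exists c.
apply: ge_ereal_sup => _ [c hc <-].
have c0 := stake_ge0 hc.
case: (pselect (exists N, c N = 0)) => [[N hN]|hpos].
  apply: ereal_sup_ubound; exists c => //; split => //; exists N => i hi.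
  by apply/eqP; rewrite eq_le c0 andbT -hN; exact: stake_noninc hc _ _ hi.
have cpos : forall i, 0 < c i.
  by move=> i; rewrite lt_def c0 andbT; apply/eqP => h; apply: hpos; exists i.
apply/lee_addgt0Pr => e e0.
have [n [n1 hEx]] := main_bound hc cpos p0 pt t1 e0.
set C := \sum_(i < n) c i.
have C0 : 0 < C.
  apply: lt_le_trans (cpos 0%N) _.
  have := Cn_mono hc n1; rewrite big_ord_recl big_ord0 addr0; exact.
pose c' i := if (i < n)%N then c i / C else 0.
have c'0 : forall i, 0 <= c' i by move=> i; rewrite /c'; case: ifP => // _; rewrite divr_ge0 // ltW.
have c'z : forall i, (n <= i)%N -> c' i = 0 by move=> i hi; rewrite /c' ltnNge hi.
have hc' : finite_stake_seq c'.
  split; last by exists n.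
  split => //.
    move=> i; rewrite /c'; case: ifP => hi1; case: ifP => hi2 //.
    + by rewrite ler_pM2r ?invr_gt0 //; apply: stake_noninc hc _ _ (leqnSn i).
    + by move: hi2; rewrite (ltn_trans (ltnSn i) hi1).
    + by rewrite divr_ge0 // ltW.
  rewrite (series_fin c'0 c'z) /c'.
  rewrite (eq_bigr (fun i : 'I_n => c i / C)); last by move=> i _; rewrite ltn_ord.
  by rewrite -mulr_suml divff // gt_eqF.
have mS : measurable [set x | (t%:E <= S_gamma c beta x)%E].
  have hm : measurable_fun setT (S_gamma c beta).
    have := @ge0_emeasurable_sum d T R setT (fun k x => (c k * beta k x)%:E) xpredT.
    apply.
    - by move=> k x _ _; rewrite lee_fin mulr_ge0 // (beta_ge0 hb).
    - move=> k _; apply/measurable_EFinP; apply: measurable_funM.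
        exact: measurable_cst.
      by case: hb.
  by have := emeasurable_fun_c_infty measurableT hm t%:E; rewrite setTI.
set X1 := [set x | t * C <= vn c n (bits beta 0 n x)].
set X2 := [set x | An t c n (bits beta 0 n x)].
have mX1 : measurable X1 by exact: (mbits hb n 0 (fun s => t * C <= vn c n s)).
have mX2 : measurable X2 by exact: (mbits hb n 0 (An t c n)).
have vbits : forall x, vn c n (bits beta 0 n x) = \sum_(i < n) c i * (beta i x == 1)%:R.
  by move=> x; apply: eq_bigr => i _; rewrite nth_bits.
have hsub : [set x | (t%:E <= S_gamma c beta x)%E] `<=` X1 `|` X2.
  move=> x /= hx; have := le_trans hx (S_le hb x n hc); rewrite lee_fin -vbits -/C => h.
  case: (leP (t * C) (vn c n (bits beta 0 n x))) => h2; [by left | right].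
  rewrite /X2 /An -/C /=; apply/andP; split; [lra | exact: h2].
have key : forall x, S_gamma c' beta x = ((vn c n (bits beta 0 n x)) / C)%:E.
  move=> x; rewrite (S_fin hb x c'0 c'z) vbits mulr_suml; congr (_%:E).
  by apply: eq_bigr => i _; rewrite /c' ltn_ord mulrAC.
have hX1 : P X1 = prob_ge P beta c' t.
  rewrite /prob_ge; congr (P _); apply/seteqP; split => x /=;
    by rewrite key lee_fin ler_pdivlMr.
have hX2 : P X2 = (Ex p n (fun s => (An t c n s)%:R))%:E by rewrite /X2 (Pbits hb).
rewrite /prob_ge.
apply: le_trans (le_measure _ _ _ hsub) _.
- by rewrite inE.
- by rewrite inE; exact: measurableU.
apply: le_trans (measureU2 _ mX1 mX2) _.
apply: (@le_trans _ _ (prob_ge P beta c' t + (Ex p n (fun s => (An t c n s)%:R))%:E)%E).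
  by rewrite le_eqVlt; apply/orP; left; apply/eqP; congr (_ + _)%E; [exact: hX1 | exact: hX2].
apply: leeD; last by rewrite lee_fin.
by apply: ereal_sup_ubound; exists c'.
Qed.
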